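(* Let $R$ be a $\mathbb{C}$-algebra which is a noetherian UFD, let $r,s\in R$ be elements such that the ideal $(r,s)$ has height $2$ and $r,s$ share no common non-unit factor, and let $A_{r,s}:=R[U,V]/(rU-sV-1)$ with $u,v$ the residue classes of $U,V$. Assume: $A_{r,s}$ is a UFD; $A_{r,s}^*=R^*$; $R$ is rigid and $ML(A_{r,s})=R$. Let $E$ be the $R$-derivation of $A_{r,s}$ with $E(u)=s$, $E(v)=r$. Then for every $\mathbb{C}$-algebra automorphism $\varphi$ of $A_{r,s}$ one has $\varphi^{-1}E\varphi=\lambda E$ for some $\lambda\in R^*$.
   Context: A derivation $D$ of a ring $B$ is locally nilpotent if for every $b\in B$ there is $n$ with $D^n(b)=0$; $\operatorname{LND}(B)$ denotes the set of locally nilpotent $\mathbb{C}$-derivations of the $\mathbb{C}$-algebra $B$. The Makar-Limanov invariant $ML(B)$ is the intersection of the kernels of all $D\in\operatorname{LND}(B)$. $B$ is rigid if $\operatorname{LND}(B)=\{0\}$. $B^*$ denotes the unit group. *)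

(* Defs.v *)
From mathcomp Require Import all_boot all_order all_algebra all_fingroup.
From mathcomp Require Import reals complex.
Set Implicit Arguments. Unset Strict Implicit. Unset Printing Implicit Defensive.
Import GRing.Theory.
Local Open Scope ring_scope.

Notation cplx Rr := (Rr[i])%type (only parsing).

Section CommAlg.
Variable R : idomainType.

Definition dvdr (a b : R) : Prop := exists c, b = c * a.
Definition assoc (a b : R) : Prop := exists2 u, u \is a GRing.unit & a = u * b.
Definition irreducibleR (a : R) : Prop :=
  [/\ a != 0, a \isn't a GRing.unit &
      forall b c, a = b * c -> b \is a GRing.unit \/ c \is a GRing.unit].

Definition UFD : Prop :=
  (forall a : R, a != 0 -> a \isn't a GRing.unit ->
     exists s : seq R, (forall x, x \in s -> irreducibleR x) /\
                       a = \prod_(x <- s) x) /\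
  (forall s t : seq R,
     (forall x, x \in s -> irreducibleR x) ->
     (forall x, x \in t -> irreducibleR x) ->
     \prod_(x <- s) x = \prod_(x <- t) x ->
     size s = size t /\
     exists sigma : 'S_(size s),
       forall i : 'I_(size s), assoc (nth 0 s i) (nth 0 t (sigma i))).

Definition ideal (I : R -> Prop) : Prop :=
  [/\ I 0, (forall x y, I x -> I y -> I (x + y)) &
      (forall a x, I x -> I (a * x))].
Definition subI (I J : R -> Prop) : Prop := forall x, I x -> J x.
Definition ssubI (I J : R -> Prop) : Prop := subI I J /\ exists x, J x /\ ~ I x.
Definition eqI (I J : R -> Prop) : Prop := forall x, I x <-> J x.
Definition prime_ideal (P : R -> Prop) : Prop :=
  [/\ ideal P, ~ P 1 & forall a b, P (a * b) -> P a \/ P b].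

Definition noetherian : Prop :=
  forall I : nat -> R -> Prop,
    (forall n, ideal (I n)) -> (forall n, subI (I n) (I n.+1)) ->
    exists n, forall m, (n <= m)%N -> eqI (I m) (I n).

Definition ideal2 (r s : R) : R -> Prop := fun x => exists a b, x = a * r + b * s.

Definition prime_chain_to (n : nat) (P : R -> Prop) : Prop :=
  exists f : nat -> R -> Prop,
    [/\ forall i, (i <= n)%N -> prime_ideal (f i),
        forall i, (i < n)%N -> ssubI (f i) (f i.+1) & eqI (f n) P].

Definition height_ge (I : R -> Prop) (n : nat) : Prop :=
  forall P, prime_ideal P -> subI I P -> prime_chain_to n P.
Definition height_eq (I : R -> Prop) (n : nat) : Prop :=
  height_ge I n /\ ~ height_ge I n.+1.
End CommAlg.

(* C-algebras: a commutative ring B together with a ring morphism C -> B. *)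
Section Derivations.
Variables (C : fieldType) (B : comNzRingType) (c : C -> B).

Definition derivation (D : B -> B) : Prop :=
  (forall x y, D (x + y) = D x + D y) /\
  (forall x y, D (x * y) = x * D y + D x * y).

Definition LND (D : B -> B) : Prop :=
  [/\ derivation D, (forall (k : C) x, D (c k * x) = c k * D x) &
      forall b, exists n, iter n D b = 0].

Definition rigid : Prop := forall D, LND D -> forall b, D b = 0.

Definition in_ML (b : B) : Prop := forall D, LND D -> D b = 0.
End Derivations.

(* Presentation of A as R[U,V]/(rU - sV - 1), with u, v the classes of U, V.
   R[U,V] is {poly {poly R}} (outer variable U, inner variable V). *)
Section Presentation.
Variables (R : idomainType) (A : comNzRingType) (iota : {rmorphism R -> A}).

Definition evUV (u v : A) (p : {poly {poly R}}) : A :=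
  (map_poly (fun q : {poly R} => (map_poly iota q).[v]) p).[u].

Definition relUV (r s : R) : {poly {poly R}} :=
  (r%:P)%:P * 'X - (s%:P * 'X)%:P - 1.

Definition is_presentation (r s : R) (u v : A) : Prop :=
  (forall a : A, exists p, evUV u v p = a) /\
  (forall p, evUV u v p = 0 <-> exists q, p = q * relUV r s).
End Presentation.

(* Main.v *)
Require Import Defs.
From mathcomp Require Import all_boot all_order all_algebra all_fingroup.
From mathcomp Require Import reals complex.
From mathcomp Require Import ring zify.
From Stdlib Require Import Classical.
Set Implicit Arguments. Unset Strict Implicit.
Import GRing.Theory.
Local Open Scope ring_scope.

Section Gen.
Variables (R : idomainType) (A : idomainType) (iota : {rmorphism R -> A}) (u v : A) (r s : R).
Hypothesis surj : forall a : A, exists p, evUV iota u v p = a.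

Lemma rel0 : evUV iota u v (relUV r s) = iota r * u - iota s * v - 1.
Proof.
rewrite /evUV /relUV.
pose F : {rmorphism {poly R} -> A} := (horner_eval v \o map_poly iota)%FUN.
have -> : map_poly (fun q : {poly R} => (map_poly iota q).[v]) = map_poly F by [].
rewrite !rmorphB !rmorphM /= !map_polyC map_polyX !hornerE /=. rewrite /comp/= ?horner_evalE !map_polyC map_polyX !hornerE; congr (_ - _ - _); exact: rmorph1.
Qed.

Lemma gen_ind (P : A -> Prop) :
  (forall x y, P x -> P y -> P (x + y)) -> (forall x y, P x -> P y -> P (x * y)) ->
  (forall x, P (iota x)) -> P u -> P v -> forall a, P a.
Proof.
move=> PD PM PR Pu Pv a.
have P0 : P 0 by rewrite -(rmorph0 iota).
have P1 : P 1 by rewrite -(rmorph1 iota).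
have PX : forall x i, P x -> P (x ^+ i).
  by move=> x i Px; elim: i => [|i IH]; rewrite ?expr0 // exprS; apply: (PM).
have [p <-] := surj a.
rewrite /evUV horner_coef; apply: big_ind => // i _.
apply: (PM); last exact: (PX).
rewrite coef_map_id0; last by rewrite map_poly0 horner0.
rewrite horner_coef; apply: big_ind => // j _.
by apply: (PM); [rewrite coef_map; apply: (PR)| exact: (PX)].
Qed.
End Gen.

Section Der.
Variable (A : idomainType).
Implicit Types (D : A -> A).

Lemma der0 D : derivation D -> D 0 = 0.
Proof. by case=> DD _; have := DD 0 0; rewrite addr0 -{1}[D 0]addr0 => /addrI. Qed.
Lemma der1 D : derivation D -> D 1 = 0.
Proof.
case=> DD DM; have := DM 1 1; rewrite !mul1r mulr1 -{1}[D 1]addr0.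
by move=> /addrI.
Qed.
Lemma derN D : derivation D -> forall x, D (- x) = - D x.
Proof.
move=> dD x; have [DD _] := dD; apply: (addrI (D x)).
by rewrite -DD !subrr der0.
Qed.
Lemma derB D : derivation D -> forall x y, D (x - y) = D x - D y.
Proof. by move=> dD x y; rewrite dD.1 derN. Qed.

Lemma iter0 D n : derivation D -> iter n D 0 = 0.
Proof. by move=> dD; elim: n => //= n ->; rewrite der0. Qed.
Lemma iterDD D n : derivation D -> forall x y, iter n D (x + y) = iter n D x + iter n D y.
Proof. by move=> dD; elim: n => //= n IH x y; rewrite IH dD.1. Qed.

Lemma iterM D : derivation D -> forall k m n a b, (m + n <= k)%N ->
  iter m D a = 0 -> iter n D b = 0 -> iter (m + n) D (a * b) = 0.
Proof.
move=> dD; elim=> [|k IH] m n a b hk ha hb.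
  by move: hk; rewrite leqn0 addn_eq0 => /andP[/eqP m0 /eqP n0]; subst; move: ha hb => /= -> _; rewrite mul0r.
case: m ha hk => [|m] ha hk.
  by have ha' : a = 0 by []; rewrite ha' mul0r iter0.
case: n hb hk => [|n] hb hk.
  by have hb' : b = 0 by []; rewrite hb' mulr0 iter0.
rewrite addSn iterSr dD.2 iterDD //.
have e1 : iter (m + n.+1) D (a * D b) = 0.
  rewrite addnS -addSn; apply: IH; [lia | done | by rewrite -iterSr].
have e2 : iter (m + n.+1) D (D a * b) = 0.
  apply: IH; [lia | by rewrite -iterSr | done].
by rewrite e1 e2 addr0.
Qed.

Definition LN D (a : A) := exists n, iter n D a = 0.

Lemma LN_add D : derivation D -> forall x y, LN D x -> LN D y -> LN D (x + y).
Proof.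
move=> dD x y [m hm] [n hn]; exists (m + n)%N.
by rewrite iterDD // {1}addnC !iterD hm hn !iter0 // addr0.
Qed.
Lemma LN_mul D : derivation D -> forall x y, LN D x -> LN D y -> LN D (x * y).
Proof. by move=> dD x y [m hm] [n hn]; exists (m + n)%N; exact: (@iterM D dD (m + n) m n x y (leqnn _) hm hn). Qed.
End Der.

Section Inv.
Variables (A : idomainType) (psi chi : A -> A).
Hypotheses (psiK : cancel psi chi) (chiK : cancel chi psi)
  (psiD : forall x y, psi (x + y) = psi x + psi y)
  (psiM : forall x y, psi (x * y) = psi x * psi y).
Lemma psi0 : psi 0 = 0.
Proof. by have := psiD 0 0; rewrite addr0 -{1}[psi 0]addr0 => /addrI. Qed.
Lemma chiD x y : chi (x + y) = chi x + chi y.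
Proof. by apply: (can_inj psiK); rewrite psiD !chiK. Qed.
Lemma chiM x y : chi (x * y) = chi x * chi y.
Proof. by apply: (can_inj psiK); rewrite psiM !chiK. Qed.
Lemma chi0 : chi 0 = 0.
Proof. by rewrite -{1}psi0 psiK. Qed.
End Inv.

Section Main.
Variables (Rr : realType) (R : idomainType) (cR : {rmorphism Rr[i] -> R}) (r s : R)
  (A : idomainType) (iota : {rmorphism R -> A}) (u v : A).
Hypotheses (A_pres : is_presentation iota r s u v)
  (ML_A : forall a : A, in_ML (fun k => iota (cR k)) a <-> exists x : R, a = iota x)
  (E : A -> A) (E_der : derivation E)
  (E_R : forall x : R, E (iota x) = 0)
  (E_u : E u = iota s) (E_v : E v = iota r).

Lemma E_LN a : LN E a.
Proof.
move: a; apply: (gen_ind (proj1 A_pres)).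
- exact: LN_add.
- exact: LN_mul.
- by move=> x; exists 1%N; rewrite /= E_R.
- by exists 2%N; rewrite /= E_u E_R.
- by exists 2%N; rewrite /= E_v E_R.
Qed.

Lemma hrel : iota r * u - iota s * v = 1.
Proof.
apply/eqP; rewrite -subr_eq0 -rel0; apply/eqP.
by apply/((proj2 A_pres _)); exists 1; rewrite mul1r.
Qed.

Lemma key (psi chi : A -> A) (psiK : cancel psi chi) (chiK : cancel chi psi)
  (psiD : forall x y, psi (x + y) = psi x + psi y)
  (psiM : forall x y, psi (x * y) = psi x * psi y)
  (psiC : forall k, psi (iota (cR k)) = iota (cR k)) :
  exists f, forall a, chi (E (psi a)) = f * E a.
Proof.
have chiC : forall k, chi (iota (cR k)) = iota (cR k).
  by move=> k; rewrite -{1}psiC psiK.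
pose D a := chi (E (psi a)).
have dD : derivation D.
  split=> x y; rewrite /D.
    by rewrite psiD E_der.1 (chiD psiK chiK psiD).
  by rewrite psiM E_der.2 (chiD psiK chiK psiD) !(chiM psiK chiK psiM) !psiK.
have itD : forall n a, iter n D a = chi (iter n E (psi a)).
  elim=> [|n IH] a /=; first by rewrite psiK.
  by rewrite IH /D chiK.
have lnd : LND (fun k => iota (cR k)) D.
  split=> //.
    move=> k x; rewrite /D psiM psiC E_der.2 E_R mul0r addr0.
    by rewrite (chiM psiK chiK psiM) chiC.
  move=> b; have [n hn] := E_LN (psi b); exists n.
  by rewrite itD hn (chi0 psiK psiD).
have DR : forall x, D (iota x) = 0.
  by move=> x; apply: (proj2 (ML_A (iota x))) => //; exists x.
have h : iota r * D u - iota s * D v = 0.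
  have := f_equal D hrel; rewrite (derB dD) !dD.2 !DR (der1 dD) !mul0r !addr0.
  done.
have hrel' : iota r * u - iota s * v - 1 = 0 by rewrite hrel subrr.
pose f := u * D v - v * D u.
have Du : D u = f * iota s.
  apply/eqP; rewrite eq_sym -subr_eq0.
  have -> : f * iota s - D u = u * (- (iota r * D u - iota s * D v)) + D u * (iota r * u - iota s * v - 1).
    by rewrite /f; ring.
  by rewrite h hrel' oppr0 !mulr0 addr0.
have Dv : D v = f * iota r.
  apply/eqP; rewrite eq_sym -subr_eq0.
  have -> : f * iota r - D v = - v * (iota r * D u - iota s * D v) + D v * (iota r * u - iota s * v - 1).
    by rewrite /f; ring.
  by rewrite h hrel' !mulr0 addr0.
exists f; apply: (gen_ind (proj1 A_pres) (P := fun a => D a = f * E a)).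
- by move=> x y hx hy; rewrite dD.1 E_der.1 hx hy mulrDr.
- by move=> x y hx hy; rewrite dD.2 E_der.2 hx hy; ring.
- by move=> x; rewrite DR E_R mulr0.
- by rewrite Du E_u.
- by rewrite Dv E_v.
Qed.
End Main.

Unset Implicit Arguments.
Theorem mainTheorem5
  (Rr : realType) (R : idomainType) (cR : {rmorphism Rr[i] -> R})
  (r s : R)
  (R_UFD : UFD R) (R_noeth : noetherian R)
  (ht_rs : height_eq (ideal2 r s) 2)
  (rs_coprime : forall d : R, dvdr d r -> dvdr d s -> d \is a GRing.unit)
  (A : idomainType) (iota : {rmorphism R -> A}) (u v : A)
  (A_pres : is_presentation iota r s u v)
  (A_UFD : UFD A)
  (A_units : forall a : A,
     a \is a GRing.unit <-> exists2 x : R, x \is a GRing.unit & a = iota x)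
  (R_rigid : rigid cR)
  (ML_A : forall a : A, in_ML (fun k => iota (cR k)) a <-> exists x : R, a = iota x)
  (E : A -> A) (E_der : derivation E)
  (E_R : forall x : R, E (iota x) = 0)
  (E_u : E u = iota s) (E_v : E v = iota r)
  (phi : {rmorphism A -> A}) (phi_inv : A -> A)
  (phiK : cancel phi phi_inv) (phi_invK : cancel phi_inv phi)
  (phi_C : forall k : Rr[i], phi (iota (cR k)) = iota (cR k)) :
  exists2 lam : R, lam \is a GRing.unit &
    forall a : A, phi_inv (E (phi a)) = iota lam * E a.
Proof.
have phiD : forall x y, phi (x + y) = phi x + phi y by move=> x y; rewrite rmorphD.
have phiM : forall x y, phi (x * y) = phi x * phi y by move=> x y; rewrite rmorphM.
have [f hf] := key A_pres ML_A E_der E_R E_u E_v phiK phi_invK phiD phiM phi_C.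
have invD := chiD phiK phi_invK phiD.
have invM := chiM phiK phi_invK phiM.
have invC : forall k, phi_inv (iota (cR k)) = iota (cR k).
  by move=> k; rewrite -{1}phi_C phiK.
have [g hg] := key A_pres ML_A E_der E_R E_u E_v phi_invK phiK invD invM invC.
have all_a : forall a, E a = phi f * g * E a.
  move=> a; rewrite -{1}[E a]phi_invK -{1}[a]phi_invK hf rmorphM hg mulrA //.
case: (classic (exists a, E a != 0)) => [[a0 ha0]|nE].
  have hfg : phi f * g = 1.
    have := all_a a0; move/eqP; rewrite -subr_eq0 -{1}[E a0]mul1r -mulrBl mulf_eq0.
    by rewrite (negbTE ha0) orbF subr_eq0 eq_sym => /eqP.
  have fU : f \is a GRing.unit.
    apply/unitrP; exists (phi_inv g); split; last first.
      by rewrite -[f]phiK -invM hfg -{1}(rmorph1 phi) phiK.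
    by rewrite mulrC -[f]phiK -invM hfg -{1}(rmorph1 phi) phiK.
  have [x xU fx] := (A_units f).1 fU.
  by exists x => // a; rewrite hf fx.
exists 1; first exact: unitr1.
move=> a; have Ea : forall b, E b = 0.
  by move=> b; apply: NNPP => hb; apply: nE; exists b; apply/eqP.
by rewrite !Ea mulr0 (chi0 phiK phiD).
Qed.
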